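(* Let $k,s$ be integers with $k\geq 3$ and $s\geq 2$. Then: (1) $\mathrm{GR}_{3}(\vee_2:\mathcal{C}_s)=2s-1$. (2) The pair $(\vee_2,\mathcal{C}_s)$ is $(\vee_2:\mathcal{C}_s)_4$-good for $s\in\{2,3\}$, and $\mathrm{GR}_{4}(\vee_2:\mathcal{C}_s)=s$ for all $s\geq 4$. (3) If $k\geq 5$, the pair $(\vee_2,\mathcal{C}_s)$ is $(\vee_2:\mathcal{C}_s)_k$-good.
   Context: $\mathcal{B}_N$ denotes the Boolean lattice of all subsets of $[N]$ ordered by inclusion. For posets $\mathcal{P},\mathcal{Q}$, an induced copy of $\mathcal{P}$ in $\mathcal{Q}$ is the image of an injection $f:\mathcal{P}\to\mathcal{Q}$ with $f(X)\le f(Y)$ iff $X\le Y$. $\mathcal{C}_t$ is the $t$-element chain. $\vee_2$ is the poset on three elements $X_0,X_1,X_2$ with $X_0<X_1$, $X_0<X_2$ and $X_1,X_2$ incomparable. A $k$-coloring of $\mathcal{B}_N$ is exact if it uses colors from $[k]$ and every color is used at least once. Monochromatic: all sets share one color; rainbow: all sets have pairwise distinct colors. The pair $(\mathcal{Q},\mathcal{P})$ is $(\mathcal{Q}:\mathcal{P})_k$-good if for every positive integer $N$, every exact $k$-coloring of $\mathcal{B}_N$ contains a rainbow induced copy of $\mathcal{Q}$ or a monochromatic induced copy of $\mathcal{P}$. For a pair that is not good, $\mathrm{GR}_k(\mathcal{Q}:\mathcal{P})$ is the smallest integer $n$ such that for every $N\ge n$, every exact $k$-coloring of $\mathcal{B}_N$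 contains a rainbow induced copy of $\mathcal{Q}$ or a monochromatic induced copy of $\mathcal{P}$. *)

(* Defs.v *)
From mathcomp Require Import all_boot.
Set Implicit Arguments. Unset Strict Implicit. Unset Printing Implicit Defensive.

Definition BL (N : nat) := {set 'I_N}.

(* A finite poset is given by a carrier finType T and its order relation le.
   An induced copy of (T, le) in B_N is the image of an injection f with
   f X \subset f Y  iff  le X Y. *)
Definition induced_copy (T : finType) (le : rel T) (N : nat) (f : T -> {set 'I_N}) : Prop :=
  injective f /\ forall X Y : T, (f X \subset f Y) = le X Y.

Definition chain_le (t : nat) : rel 'I_t := fun x y => (x <= y)%N.

(* The poset V_2 on 'I_3: X_0 = element 0 below X_1 = 1 and X_2 = 2, which are incomparable. *)
Definition vee2_le : rel 'I_3 := fun x y => (x == y) || (nat_of_ord x == 0%N).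

(* An exact k-coloring of B_N: colors from 'I_k (a relabeling of [k]), every color used. *)
Definition exact_coloring (k N : nat) (c : {set 'I_N} -> 'I_k) : Prop :=
  forall i : 'I_k, exists A : {set 'I_N}, c A = i.

Definition rainbow_copy (k N : nat) (c : {set 'I_N} -> 'I_k)
  (T : finType) (le : rel T) : Prop :=
  exists f : T -> {set 'I_N}, induced_copy le f /\ injective (fun x => c (f x)).

Definition mono_copy (k N : nat) (c : {set 'I_N} -> 'I_k)
  (T : finType) (le : rel T) : Prop :=
  exists f : T -> {set 'I_N}, induced_copy le f /\ forall x y, c (f x) = c (f y).

Definition GR_prop (k : nat) (TQ : finType) (leQ : rel TQ) (TP : finType) (leP : rel TP)
  (N : nat) : Prop :=
  forall c : {set 'I_N} -> 'I_k, exact_coloring c ->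
    rainbow_copy c leQ \/ mono_copy c leP.

Definition good (k : nat) (TQ : finType) (leQ : rel TQ) (TP : finType) (leP : rel TP) : Prop :=
  forall N : nat, (0 < N)%N -> GR_prop k leQ leP N.

Definition GR_eq (k : nat) (TQ : finType) (leQ : rel TQ) (TP : finType) (leP : rel TP)
  (n : nat) : Prop :=
  ~ good k leQ leP /\
  (forall N, (n <= N)%N -> GR_prop k leQ leP N) /\
  (forall m, (forall N, (m <= N)%N -> GR_prop k leQ leP N) -> (n <= m)%N).

(* Main.v *)
Require Import Defs.
From mathcomp Require Import all_boot zify.
From Stdlib Require Import Classical_Prop.
Set Implicit Arguments. Unset Strict Implicit. Unset Printing Implicit Defensive.

Lemma inj_of_antisym (T : finType) (le : rel T) N (f : T -> {set 'I_N}) :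
  (forall x y, le x y -> le y x -> x = y) ->
  (forall x y, (f x \subset f y) = le x y) -> injective f.
Proof. by move=> As Hf x y Exy; apply: As; rewrite -Hf Exy subxx. Qed.

Definition v3 N (X0 X1 X2 : {set 'I_N}) (i : 'I_3) : {set 'I_N} :=
  if val i == 0 then X0 else if val i == 1 then X1 else X2.

Lemma mk_rainbow k N (c : {set 'I_N} -> 'I_k) (X0 X1 X2 : {set 'I_N}) :
  X0 \subset X1 -> X0 \subset X2 -> ~~ (X1 \subset X2) -> ~~ (X2 \subset X1) ->
  c X0 != c X1 -> c X0 != c X2 -> c X1 != c X2 -> rainbow_copy c vee2_le.
Proof.
move=> h01 h02 n12 n21 d01 d02 d12.
have n10 : ~~ (X1 \subset X0).
  by apply: contra n12 => h; apply: subset_trans h h02.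
have n20 : ~~ (X2 \subset X0).
  by apply: contra n21 => h; apply: subset_trans h h01.
have Hs : forall x y, (v3 X0 X1 X2 x \subset v3 X0 X1 X2 y) = vee2_le x y.
  move=> [[|[|[|x]]] hx] [[|[|[|y]]] hy] //=; rewrite /v3 /vee2_le /= ?subxx //;
   by apply: negbTE.
exists (v3 X0 X1 X2); split; first split => //.
  apply: inj_of_antisym Hs => x y; rewrite /vee2_le.
  case: (eqVneq x y) => // nxy /= /eqP x0 /eqP y0; apply: ord_inj; by rewrite x0 y0.
move=> [[|[|[|x]]] hx] [[|[|[|y]]] hy] //=; rewrite /v3 /= => E;
  try (by apply: ord_inj); exfalso.
all: first [by rewrite E eqxx in d01 | by rewrite E eqxx in d02
   | by rewrite E eqxx in d12 | by rewrite -E eqxx in d01 | by rewrite -E eqxx in d02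
   | by rewrite -E eqxx in d12 | idtac].
Qed.

Lemma rainbow_elim k N (c : {set 'I_N} -> 'I_k) : rainbow_copy c vee2_le ->
  exists X0 X1 X2 : {set 'I_N}, [/\ X0 \subset X1, X0 \subset X2, ~~ (X1 \subset X2),
    ~~ (X2 \subset X1) & [/\ c X0 != c X1, c X0 != c X2 & c X1 != c X2]].
Proof.
move=> [f [[finj Hf] cinj]].
exists (f (Ordinal (isT : 0 < 3))), (f (Ordinal (isT : 1 < 3))), (f (Ordinal (isT : 2 < 3))).
rewrite !Hf; split => //; split; apply/eqP => /cinj /(congr1 val) //.
Qed.

Lemma chain_mk N s (r : 'I_N -> nat) (g : 'I_s -> nat) :
  (forall n, n < N -> exists x, r x = n) ->
  (forall i j : 'I_s, i < j -> g i < g j) -> (forall i, g i <= N) ->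
  induced_copy (@chain_le s) (fun i => [set j | r j < g i]).
Proof.
move=> Hr Hg HN.
have Hs : forall i j : 'I_s, ([set x | r x < g i] \subset [set x | r x < g j]) = chain_le i j.
  move=> i j; rewrite /chain_le.
  case: (leqP i j) => hij.
  - have mon : g i <= g j.
      rewrite leq_eqVlt in hij; case/orP: hij => [/eqP/ord_inj -> //| /Hg /ltnW //].
    by apply/subsetP => x; rewrite !inE => hx; exact: leq_trans hx mon.
  - apply/negbTE/subsetPn.
    have hj : g j < N := leq_trans (Hg _ _ hij) (HN i).
    have [x hx] := Hr _ hj.
    by exists x; rewrite !inE hx ?ltnn // Hg.
split => //; apply: inj_of_antisym Hs => x y; rewrite /chain_le => h1 h2.
by apply: ord_inj; apply/eqP; rewrite eqn_leq h1 h2.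
Qed.

Lemma noR k N (c : {set 'I_N} -> 'I_k) : ~ rainbow_copy c vee2_le ->
  forall X0 X1 X2 : {set 'I_N}, X0 \subset X1 -> X0 \subset X2 -> ~~ (X1 \subset X2) ->
  ~~ (X2 \subset X1) -> [\/ c X0 = c X1, c X0 = c X2 | c X1 = c X2].
Proof.
move=> NR X0 X1 X2 h1 h2 h3 h4.
case: (eqVneq (c X0) (c X1)) => [e|d1]; first by constructor 1.
case: (eqVneq (c X0) (c X2)) => [e|d2]; first by constructor 2.
case: (eqVneq (c X1) (c X2)) => [e|d3]; first by constructor 3.
by case: NR; apply: mk_rainbow h1 h2 h3 h4 d1 d2 d3.
Qed.

Lemma colneq k N (c : {set 'I_N} -> 'I_k) (X Y : {set 'I_N}) : c X != c Y -> X != Y.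
Proof. by apply: contra_neq => ->. Qed.

Lemma cmp k N (c : {set 'I_N} -> 'I_k) : ~ rainbow_copy c vee2_le ->
  forall X Y : {set 'I_N}, c X != c set0 -> c Y != c set0 -> c X != c Y ->
  (X \subset Y) || (Y \subset X).
Proof.
move=> NR X Y hX hY hXY; apply/negPn/negP; rewrite negb_or => /andP [n1 n2].
case: (noR NR (sub0set X) (sub0set Y) n1 n2) => e.
- by rewrite e eqxx in hX.
- by rewrite e eqxx in hY.
- by rewrite e eqxx in hXY.
Qed.

Lemma keyL k N (c : {set 'I_N} -> 'I_k) : ~ rainbow_copy c vee2_le ->
  forall (B C : {set 'I_N}) x,
  B \subset C -> B != C -> c B != c set0 -> c C != c set0 -> c B != c C -> x \notin C ->
  c (x |: B) = c C.
Proof.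
move=> NR B C x hBC nBC hB hC hBCc hx.
have hBD : B \subset x |: B := subsetUr _ _.
have nCD : ~~ (C \subset x |: B).
  apply/negP => hCD; move/negP: nBC; apply; rewrite eqEsubset hBC /=.
  apply/subsetP => z hz; have := subsetP hCD z hz; rewrite !inE => /orP [/eqP ez|//].
  by move: hx; rewrite -ez hz.
have nDC : ~~ (x |: B \subset C).
  by apply/negP => /subsetP /(_ x); rewrite !inE eqxx /= => /(_ isT); rewrite (negbTE hx).
case: (noR NR (sub0set C) (sub0set (x |: B)) nCD nDC) => e.
- by rewrite e eqxx in hC.
- case: (noR NR hBC hBD nCD nDC) => e'.
  + by rewrite e' eqxx in hBCc.
  + by move: hB; rewrite e' -e eqxx.
  + by rewrite e'.
- by rewrite e.
Qed.

Lemma notT N (Q : {set 'I_N}) : Q != setT -> exists x, x \notin Q.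
Proof.
move=> nQ; have /subsetPn [x _ hx] : ~~ (setT \subset Q) by rewrite subTset.
by exists x.
Qed.

Lemma core k N (c : {set 'I_N} -> 'I_k) : ~ rainbow_copy c vee2_le ->
  forall M P Q : {set 'I_N},
  M \subset P -> M \subset Q -> P \subset Q -> Q != setT ->
  c M != c set0 -> c P != c set0 -> c Q != c set0 -> c M != c P -> c M != c Q ->
  c P != c Q -> False.
Proof.
move=> NR M P Q hMP hMQ hPQ nQ hM hP hQ dMP dMQ dPQ.
have [x hxQ] := notT nQ.
have hxP : x \notin P by apply: contra hxQ; exact: (subsetP hPQ x).
have e1 := keyL NR hMP (colneq dMP) hM hP dMP hxP.
have e2 := keyL NR hMQ (colneq dMQ) hM hQ dMQ hxQ.
by rewrite -e1 -e2 eqxx in dPQ.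
Qed.

Lemma no3 k N (c : {set 'I_N} -> 'I_k) : ~ rainbow_copy c vee2_le ->
  forall X Y Z : {set 'I_N},
  X != setT -> Y != setT -> Z != setT -> c X != c set0 -> c Y != c set0 -> c Z != c set0 ->
  c X != c Y -> c X != c Z -> c Y != c Z -> False.
Proof.
move=> NR.
have K : forall X Y Z : {set 'I_N}, X \subset Y -> X \subset Z -> Y != setT -> Z != setT ->
  c X != c set0 -> c Y != c set0 -> c Z != c set0 ->
  c X != c Y -> c X != c Z -> c Y != c Z -> False.
  move=> X Y Z hXY hXZ nY nZ hX hY hZ dXY dXZ dYZ.
  case/orP: (cmp NR hY hZ dYZ) => h.
  - exact: (core NR hXY hXZ h nZ hX hY hZ dXY dXZ dYZ).
  - by apply: (core NR hXZ hXY h nY hX hZ hY dXZ dXY); rewrite eq_sym.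
move=> X Y Z nX nY nZ hX hY hZ dXY dXZ dYZ.
have sym : forall a b : 'I_k, a != b -> b != a by move=> a b; rewrite eq_sym.
case/orP: (cmp NR hX hY dXY) => [sXY|sYX]; case/orP: (cmp NR hX hZ dXZ) => [sXZ|sZX];
  case/orP: (cmp NR hY hZ dYZ) => [sYZ|sZY].
- exact: (K X Y Z).
- exact: (K X Y Z).
- by apply: (K Z X Y sZX (subset_trans sZX sXY)); rewrite // eq_sym.
- by apply: (K Z X Y sZX sZY); rewrite // eq_sym.
- by apply: (K Y X Z sYX sYZ); rewrite // eq_sym.
- by apply: (K Y X Z sYX (subset_trans sYX sXZ)); rewrite // eq_sym.
- by apply: (K Y X Z sYX sYZ); rewrite // eq_sym.
- by apply: (K Z Y X sZY sZX); rewrite // eq_sym.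
Qed.

Lemma claimM k N (c : {set 'I_N} -> 'I_k) : ~ rainbow_copy c vee2_le ->
  forall B C : {set 'I_N},
  B != setT -> C != setT -> c B != c set0 -> c C != c set0 -> c B != c C ->
  exists y, forall X, X != setT -> c X != c set0 -> y \in X.
Proof.
move=> NR B C nB nC hB hC dBC.
pose P := fun X : {set 'I_N} => (X != setT) && (c X != c set0).
have PB : P B by rewrite /P nB hB.
case: (arg_minnP (fun X : {set 'I_N} => #|X|) PB) => m /andP [nm hm] minm.
have [C' [nC' hC' dC']] : exists C', [/\ C' != setT, c C' != c set0 & c C' != c m].
  case: (eqVneq (c B) (c m)) => e.
  - by exists C; split=> //; rewrite -e eq_sym.
  - by exists B; split.
have mC' : m \subset C'.
  case/orP: (cmp NR hm hC' ltac:(by rewrite eq_sym)) => // sC'm.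
  have le := minm C' ltac:(by rewrite /P nC' hC').
  have : C' == m by rewrite eqEcard sC'm le.
  by move/eqP => E; rewrite E eqxx in dC'.
have [x hx] := notT nC'.
have dmC : c m != c C' by rewrite eq_sym.
have eD := keyL NR mC' (colneq dmC) hm hC' dmC hx.
case/set0Pn: (colneq hm) => y hy; exists y => X nX hX.
suff : m \subset X by move/subsetP; apply.
case: (eqVneq (c X) (c m)) => eXm.
- have dXC' : c X != c C' by rewrite eXm eq_sym.
  have dXD : c X != c (x |: m) by rewrite eD.
  have hD : c (x |: m) != c set0 by rewrite eD.
  case/orP: (cmp NR hX hC' dXC') => [sXC'|sC'X]; last exact: subset_trans mC' sC'X.
  case/orP: (cmp NR hX hD dXD) => [sXD|sDX]; last exact: subset_trans (subsetUr _ _) sDX.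
  have sXm : X \subset m.
    apply/subsetP => z hz; have := subsetP sXD z hz; rewrite !inE => /orP [/eqP ez|//].
    by move: hx; rewrite -ez (subsetP sXC' z hz).
  have le := minm X ltac:(by rewrite /P nX hX).
  have /eqP <- : X == m by rewrite eqEcard sXm le.
  exact: subxx.
- case/orP: (cmp NR hm hX ltac:(by rewrite eq_sym)) => // sXm.
  have le := minm X ltac:(by rewrite /P nX hX).
  have E : X == m by rewrite eqEcard sXm le.
  by rewrite (eqP E) eqxx in eXm.
Qed.

Definition swp N (y : 'I_N) (j : 'I_N) : nat :=
  if j == y then N.-1 else if val j == N.-1 then val y else val j.

Lemma a_chain k N s (c : {set 'I_N} -> 'I_k) (y : 'I_N) : s <= N ->
  (forall X, X != setT -> c X != c set0 -> y \in X) -> mono_copy c (@chain_le s).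
Proof.
move=> sN Hy.
have N0 : 0 < N by apply: leq_ltn_trans (ltn_ord y).
have hz : N.-1 < N by lia.
exists (fun i : 'I_s => [set j | swp y j < i]); split.
- apply: chain_mk => // [n hn|i]; last by have := ltn_ord i; lia.
  case: (eqVneq n N.-1) => [->|d1]; first by exists y; rewrite /swp eqxx.
  case: (eqVneq n (val y)) => [->|d2].
    exists (Ordinal hz); rewrite /swp /=; case: eqP => [E|_]; last by rewrite eqxx.
    by rewrite -E.
  exists (Ordinal hn); rewrite /swp /=; case: eqP => [E|_]; first by rewrite -E eqxx in d2.
  by rewrite (negbTE d1).
- have E : forall i : 'I_s, c [set j | swp y j < i] = c set0.
    move=> i; apply/eqP; apply: contraT => hne.
    have ny : y \notin [set j | swp y j < i].
      rewrite inE /swp eqxx -leqNgt; have := ltn_ord i; lia.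
    have nT : [set j | swp y j < i] != setT.
      by apply/negP => /eqP E; move: ny; rewrite E inE.
    by rewrite (Hy _ nT hne) in ny.
  by move=> i j; rewrite !E.
Qed.

Lemma pred_chain N s (P : pred nat) : s <= count P (iota 0 N) ->
  exists g : 'I_s -> nat, [/\ forall i j : 'I_s, i < j -> g i < g j,
     forall i, g i < N & forall i, P (g i)].
Proof.
move=> hs; pose L := filter P (iota 0 N).
have sL : sorted ltn L := sorted_filter ltn_trans _ (iota_ltn_sorted 0 N).
have szL : size L = count P (iota 0 N) by rewrite size_filter.
have inL : forall i : 'I_s, nth 0 L i \in L.
  by move=> i; apply: mem_nth; rewrite szL (leq_trans (ltn_ord i) hs).
exists (fun i => nth 0 L i); split.
- move=> i j hij; apply: (sorted_ltn_nth ltn_trans) => //; rewrite inE szL;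
  exact: leq_trans (ltn_ord _) hs.
- move=> i; have := inL i.
  by rewrite mem_filter mem_iota add0n => /andP [_ /andP [_ ->]].
- move=> i; have := inL i.
  by rewrite mem_filter => /andP [].
Qed.

Lemma card_ltN N (X : {set 'I_N}) : X != setT -> #|X| < N.
Proof.
by move=> nX; have := proper_card (A:=X) (B:=setT); rewrite properT cardsT card_ord; apply.
Qed.

Lemma up3 N s (c : {set 'I_N} -> 'I_3) : 2 <= s -> 2 * s - 1 <= N ->
  rainbow_copy c vee2_le \/ mono_copy c (@chain_le s).
Proof.
move=> hs hN; case: (classic (rainbow_copy c vee2_le)) => [|NR]; [by left | right].
case: (classic (exists B C : {set 'I_N}, [/\ B != setT, C != setT, c B != c set0,
   c C != c set0 & c B != c C])) => [[B [C [nB nC hB hC dBC]]]|NBC].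
  have [y Hy] := claimM NR nB nC hB hC dBC; apply: a_chain Hy; lia.
pose Q := fun n => c [set j : 'I_N | j < n] == c set0.
have Hcnt := count_predC Q (iota 0 N); rewrite size_iota in Hcnt.
have hint : forall n, n < N -> [set j : 'I_N | j < n] != setT.
  move=> n hn; apply/negP => /eqP E.
  have hz : N.-1 < N by lia.
  have : Ordinal hz \in [set j : 'I_N | j < n] by rewrite E inE.
  rewrite inE /=; lia.
have ch : forall g : 'I_s -> nat, (forall i j : 'I_s, i < j -> g i < g j) ->
    (forall i, g i < N) -> induced_copy (@chain_le s) (fun i => [set j : 'I_N | j < g i]).
  move=> g gm gN; apply: (chain_mk (r := fun j => val j)) => // [n hn|i].
  - by exists (Ordinal hn).
  - exact: ltnW.
case: (leqP s (count Q (iota 0 N))) => hQ.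
- have [g [gm gN gP]] := pred_chain hQ.
  exists (fun i => [set j : 'I_N | j < g i]); split; first exact: ch.
  by move=> i j; rewrite (eqP (gP i)) (eqP (gP j)).
- have hQ' : s <= count (predC Q) (iota 0 N) by lia.
  have [g [gm gN gP]] := pred_chain hQ'.
  exists (fun i => [set j : 'I_N | j < g i]); split; first exact: ch.
  move=> i j; apply/eqP; apply: contraT => d; case: NBC.
  by exists [set x : 'I_N | x < g i], [set x : 'I_N | x < g j]; split => //;
    [exact: hint | exact: hint | exact: (gP i) | exact: (gP j)].
Qed.

Lemma N3 k N (c : {set 'I_N} -> 'I_k) : ~ rainbow_copy c vee2_le ->
  forall B C : {set 'I_N},
  B != setT -> C != setT -> c B != c set0 -> c C != c set0 -> c B != c C -> 3 <= N.
Proof.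
move=> NR.
suff K : forall B C : {set 'I_N}, B \subset C ->
  C != setT -> c B != c set0 -> c B != c C -> 3 <= N.
  move=> B C nB nC hB hC dBC.
  case/orP: (cmp NR hB hC dBC) => h; first exact: (K B C).
  by apply: (K C B) => //; rewrite eq_sym.
move=> B C hBC nC hB dBC.
have p1 : set0 \proper B by rewrite properEneq sub0set andbT eq_sym (colneq hB).
have p2 : B \proper C by rewrite properEneq hBC andbT (colneq dBC).
have := proper_card p1; have := proper_card p2; have := card_ltN nC; rewrite cards0; lia.
Qed.

Lemma pick_sets k N (c : {set 'I_N} -> 'I_k) : exact_coloring c ->
  forall i : 'I_k, i != c set0 -> i != c setT ->
  exists X : {set 'I_N}, [/\ X != setT, c X != c set0 & c X = i].
Proof.
move=> ex i h1 h2; have [X hX] := ex i; exists X; split => //.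
- by apply: contra_neq h2 => E; rewrite -hX E.
- by rewrite hX.
Qed.

Lemma cardS k (a t : 'I_k) : k - 2 <= #|~: [set a; t]|.
Proof.
have := cardsCs (~: [set a; t]); rewrite setCK cards2 card_ord.
have : (a != t).+1 <= 2 by case: (a != t).
lia.
Qed.

Lemma up4 k N s (c : {set 'I_N} -> 'I_k) : 4 <= k -> exact_coloring c -> (s <= N \/ s <= 3) ->
  rainbow_copy c vee2_le \/ mono_copy c (@chain_le s).
Proof.
move=> hk ex hsN; case: (classic (rainbow_copy c vee2_le)) => [|NR]; [by left | right].
have : 1 < #|~: [set c set0; c setT]| by have := cardS (c set0) (c setT); lia.
case/card_gt1P => i [j [hi hj dij]].
move: hi hj; rewrite !inE !negb_or => /andP [hi1 hi2] /andP [hj1 hj2].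
have [B [nB hB eB]] := pick_sets ex hi1 hi2.
have [C [nC hC eC]] := pick_sets ex hj1 hj2.
have dBC : c B != c C by rewrite eB eC.
have n3 := N3 NR nB nC hB hC dBC.
have [y Hy] := claimM NR nB nC hB hC dBC; apply: a_chain Hy; lia.
Qed.

Lemma up5 k N s (c : {set 'I_N} -> 'I_k) : 5 <= k -> exact_coloring c ->
  rainbow_copy c vee2_le \/ mono_copy c (@chain_le s).
Proof.
move=> hk ex; case: (classic (rainbow_copy c vee2_le)) => [|NR]; [by left | exfalso].
have : 2 < #|~: [set c set0; c setT]| by have := cardS (c set0) (c setT); lia.
case/card_gt2P => i [j [l [[hi hj hl] [dij djl dli]]]].
move: hi hj hl; rewrite !inE !negb_or => /andP [hi1 hi2] /andP [hj1 hj2] /andP [hl1 hl2].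
have [X [nX hX eX]] := pick_sets ex hi1 hi2.
have [Y [nY hY eY]] := pick_sets ex hj1 hj2.
have [Z [nZ hZ eZ]] := pick_sets ex hl1 hl2.
apply: (no3 NR nX nY nZ hX hY hZ); by rewrite ?eX ?eY ?eZ // eq_sym.
Qed.

Lemma chain_card N s' (f : 'I_s'.+1 -> {set 'I_N}) :
  induced_copy (@chain_le s'.+1) f -> #|f ord0| + s' <= #|f ord_max|.
Proof.
move=> [finj Hf].
have step : forall i j : 'I_s'.+1, i < j -> #|f i| < #|f j|.
  move=> i j hij; apply: proper_card; rewrite properEneq Hf /chain_le (ltnW hij) andbT.
  by apply/eqP => /finj E; rewrite E ltnn in hij.
suff K : forall n, n <= s' -> #|f ord0| + n <= #|f (inord n)|.
  have := K s' (leqnn _); have -> // : inord s' = ord_max :> 'I_s'.+1.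
  by apply: ord_inj; rewrite inordK.
elim=> [_|n IH hn].
  have -> : inord 0 = ord0 :> 'I_s'.+1 by apply: ord_inj; rewrite inordK.
  by rewrite addn0.
have := IH (ltnW hn).
have : #|f (inord n)| < #|f (inord n.+1)|.
  by apply: step; rewrite !inordK //; lia.
lia.
Qed.

Lemma ar3 (a b s' N : nat) : a + s' <= b -> b < N -> N = 2 * s' ->
  (if b < s' then 0 else 1) = (if a < s' then 0 else 1) -> False.
Proof. move=> h1 h2 h3; case: ltnP => x; case: ltnP => y // _; lia. Qed.

Lemma ar4 (a b s' N : nat) : a + s' <= b -> b < N -> N = s' -> False.
Proof. lia. Qed.

Definition h3 (s N : nat) (X : {set 'I_N}) : nat :=
  if X == setT then 2 else if #|X| < s.-1 then 0 else 1.
Definition c3 (s N : nat) (X : {set 'I_N}) : 'I_3 := inord (h3 s X).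

Lemma c3v s N (X : {set 'I_N}) : nat_of_ord (c3 s X) = h3 s X.
Proof. by rewrite /c3 inordK // /h3; case: ifP => //; case: ifP. Qed.

Lemma set0T N : 0 < N -> (set0 : {set 'I_N}) != setT.
Proof.
move=> hN; apply/eqP => E; have := cardsT 'I_N; rewrite -E cards0 card_ord; lia.
Qed.

Lemma v2_nT N (X0 X1 X2 : {set 'I_N}) : X0 \subset X1 -> X0 \subset X2 ->
  ~~ (X1 \subset X2) -> ~~ (X2 \subset X1) -> [/\ X0 != setT, X1 != setT & X2 != setT].
Proof.
move=> h01 h02 n12 n21.
have nT1 : X1 != setT by apply: contra n21 => /eqP ->; exact: subsetT.
have nT2 : X2 != setT by apply: contra n12 => /eqP ->; exact: subsetT.
split => //; apply: contra nT1 => /eqP E; by rewrite -subTset -E.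
Qed.

Lemma low3 s' N : 1 <= s' -> N = 2 * s' -> ~ GR_prop 3 vee2_le (@chain_le s'.+1) N.
Proof.
move=> hs hN H.
have hN0 : 0 < N by lia.
have ex : exact_coloring (c3 s'.+1 (N:=N)).
  move=> [[|[|[|m]]] hi] //.
  - exists set0; apply: ord_inj; rewrite c3v /h3 (negbTE (set0T hN0)) cards0 /=.
    by case: ifP => //; lia.
  - exists [set~ (Ordinal hN0)]; apply: ord_inj; rewrite c3v /h3.
    have -> : ([set~ Ordinal hN0] == setT) = false.
      by apply/negbTE/eqP => E; have := in_setT (Ordinal hN0); rewrite -E !inE eqxx.
    rewrite cardsC1 card_ord /=; case: ifP => //; lia.
  - by exists setT; apply: ord_inj; rewrite c3v /h3 eqxx.
have hle : forall X : {set 'I_N}, X != setT -> h3 s'.+1 X <= 1.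
  by move=> X nX; rewrite /h3 (negbTE nX); case: ifP.
have dh : forall X Y : {set 'I_N}, c3 s'.+1 X != c3 s'.+1 Y -> h3 s'.+1 X != h3 s'.+1 Y.
  by move=> X Y; apply: contra_neq => E; rewrite /c3 E.
case: (H _ ex) => [R|M].
- have [X0 [X1 [X2 [h01 h02 n12 n21 [d01 d02 d12]]]]] := rainbow_elim R.
  have [nT0 nT1 nT2] := v2_nT h01 h02 n12 n21.
  have := hle _ nT0; have := hle _ nT1; have := hle _ nT2.
  have := dh _ _ d01; have := dh _ _ d02; have := dh _ _ d12; lia.
- case: M => f [[finj Hf] Hc].
  have cc := chain_card (conj finj Hf).
  have hc : forall i, h3 s'.+1 (f i) = h3 s'.+1 (f ord0) by move=> i; rewrite -!c3v (Hc i ord0).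
  have d0m : f ord0 != f ord_max.
    by apply/eqP => /finj /(congr1 val) /=; lia.
  case: (eqVneq (f ord0) setT) => e0.
    have := hc ord_max; rewrite /h3 e0 eqxx; case: eqP => [em|_]; first by rewrite e0 em eqxx in d0m.
    by case: ifP.
  have nTm : f ord_max != setT.
    by apply/negP => /eqP em; have := hc ord_max; rewrite /h3 em eqxx (negbTE e0); case: ifP.
  have := hc ord_max; rewrite /h3 (negbTE e0) (negbTE nTm) /= => E.
  exact: (ar3 cc (card_ltN nTm) hN E).
Qed.

Definition h4 N (y0 : 'I_N) (X : {set 'I_N}) : nat :=
  if X == setT then 3 else if X == [set y0] then 1 else if y0 \in X then 2 else 0.
Definition c4 N (y0 : 'I_N) (X : {set 'I_N}) : 'I_4 := inord (h4 y0 X).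

Lemma c4v N (y0 : 'I_N) (X : {set 'I_N}) : nat_of_ord (c4 y0 X) = h4 y0 X.
Proof. by rewrite /c4 inordK // /h4; case: ifP => //; case: ifP => //; case: ifP. Qed.

Lemma low4 s' N : 3 <= s' -> N = s' -> ~ GR_prop 4 vee2_le (@chain_le s'.+1) N.
Proof.
move=> hs hN H.
have h0 : 0 < N by lia.
have h1 : 1 < N by lia.
have h2 : 2 < N by lia.
pose y0 := Ordinal h0; pose y1 := Ordinal h1; pose y2 := Ordinal h2.
have ex : exact_coloring (c4 y0).
  move=> [[|[|[|[|m]]]] hi] //.
  - exists set0; apply: ord_inj; rewrite c4v /h4 (negbTE (set0T h0)).
    have -> : (set0 == [set y0]) = false.
      by apply/negbTE/eqP => E; have := set11 y0; rewrite -E inE.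
    by rewrite inE.
  - exists [set y0]; apply: ord_inj; rewrite c4v /h4 eqxx.
    have -> // : ([set y0] == setT) = false.
    by apply/negbTE/eqP => E; have := in_setT y1; rewrite -E !inE.
  - exists [set y0; y1]; apply: ord_inj; rewrite c4v /h4.
    have -> : ([set y0; y1] == setT) = false.
      by apply/negbTE/eqP => E; have := in_setT y2; rewrite -E !inE.
    have -> : ([set y0; y1] == [set y0]) = false.
      by apply/negbTE/eqP => E; have := set22 y0 y1; rewrite E !inE.
    by rewrite !inE eqxx.
  - by exists setT; apply: ord_inj; rewrite c4v /h4 eqxx.
have hle : forall X : {set 'I_N}, X != setT -> h4 y0 X <= 2.
  by move=> X nX; rewrite /h4 (negbTE nX); case: ifP => //; case: ifP.
have dh : forall X Y : {set 'I_N}, c4 y0 X != c4 y0 Y -> h4 y0 X != h4 y0 Y.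
  by move=> X Y; apply: contra_neq => E; rewrite /c4 E.
have F1 : forall X, h4 y0 X = 1 -> X = [set y0].
  move=> X; rewrite /h4; case: ifP => // _; case: ifP => [/eqP //|_]; by case: ifP.
have F2 : forall X, h4 y0 X = 2 -> y0 \in X.
  move=> X; rewrite /h4; case: ifP => // _; case: ifP => // _; by case: ifP.
have F3 : forall X, X != setT -> y0 \in X -> 1 <= h4 y0 X.
  by move=> X nX yX; rewrite /h4 (negbTE nX) yX; case: ifP.
case: (H _ ex) => [R|M].
- have [X0 [X1 [X2 [h01 h02 n12 n21 [d01 d02 d12]]]]] := rainbow_elim R.
  have [nT0 nT1 nT2] := v2_nT h01 h02 n12 n21.
  have a : h4 y0 X0 = 1 -> 1 <= h4 y0 X1 /\ 1 <= h4 y0 X2.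
    move/F1 => E; split; apply: F3 => //; [apply: (subsetP h01) | apply: (subsetP h02)];
    by rewrite E set11.
  have b : h4 y0 X1 = 1 -> (h4 y0 X2 = 2 -> False) /\ (h4 y0 X0 = 2 -> 1 <= h4 y0 X2).
    move/F1 => E; split.
    + by move/F2 => y2X; move: n12; rewrite E sub1set y2X.
    + by move/F2 => yX0; apply: F3 => //; apply: (subsetP h02).
  have c : h4 y0 X2 = 1 -> (h4 y0 X1 = 2 -> False) /\ (h4 y0 X0 = 2 -> 1 <= h4 y0 X1).
    move/F1 => E; split.
    + by move/F2 => y1X; move: n21; rewrite E sub1set y1X.
    + by move/F2 => yX0; apply: F3 => //; apply: (subsetP h01).
  have := hle _ nT0; have := hle _ nT1; have := hle _ nT2.
  have := dh _ _ d01; have := dh _ _ d02; have := dh _ _ d12; lia.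
- case: M => f [[finj Hf] Hc].
  have cc := chain_card (conj finj Hf).
  have hc : forall i, h4 y0 (f i) = h4 y0 (f ord0) by move=> i; rewrite -!c4v (Hc i ord0).
  have d0m : f ord0 != f ord_max.
    by apply/eqP => /finj /(congr1 val) /=; lia.
  case: (eqVneq (f ord0) setT) => e0.
    have := hc ord_max; rewrite /h4 e0 eqxx; case: eqP => [em|_]; first by rewrite e0 em eqxx in d0m.
    by case: ifP => //; case: ifP.
  have nTm : f ord_max != setT.
    apply/negP => /eqP em; have := hc ord_max; rewrite /h4 em eqxx (negbTE e0).
    by case: ifP => //; case: ifP.
  exact: (ar4 cc (card_ltN nTm) hN).
Qed.

Lemma GR_eq_of k (TQ : finType) (leQ : rel TQ) (TP : finType) (leP : rel TP) n :
  0 < n.-1 -> ~ GR_prop k leQ leP n.-1 -> (forall N, n <= N -> GR_prop k leQ leP N) ->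
  GR_eq k leQ leP n.
Proof.
move=> hn nG HG; split; [|split] => //.
- by move=> G; apply: nG; apply: G.
- move=> m Hm; case: (leqP n m) => // hm; case: nG; apply: Hm; lia.
Qed.

Theorem theorem1p3 :
  (forall s : nat, (2 <= s)%N ->
     GR_eq 3 vee2_le (@chain_le s) (2 * s - 1)) /\
  (good 4 vee2_le (@chain_le 2) /\ good 4 vee2_le (@chain_le 3) /\
   forall s : nat, (4 <= s)%N -> GR_eq 4 vee2_le (@chain_le s) s) /\
  (forall k s : nat, (5 <= k)%N -> (2 <= s)%N -> good k vee2_le (@chain_le s)).
Proof.
split; [|split; [split; [|split]|]].
- case=> [|s'] hs //; apply: GR_eq_of.
  + lia.
  + apply: (low3 (s' := s')); lia.
  + by move=> N hN c _; apply: up3.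
- by move=> N _ c ex; apply: up4 => //; right.
- by move=> N _ c ex; apply: up4 => //; right.
- case=> [|s'] hs //; apply: GR_eq_of.
  + lia.
  + apply: (low4 (s' := s')); lia.
  + by move=> N hN c ex; apply: up4 => //; left.
- by move=> k s hk hs N _ c ex; apply: up5.
Qed.
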